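(* Let $T$ be an Artin algebra, $X$ an indecomposable left $T$-module and $n\geq1$ an integer. Let $B_n'$ be the algebra of $n\times n$ upper triangular matrices with entries in $T$, $$B_n'=\begin{pmatrix} T&T&\cdots&T\\ 0&T&\cdots&T\\ \vdots&\vdots&\ddots&\vdots\\ 0&0&\cdots&T\end{pmatrix},$$ and let $M_n$ be the column $\begin{pmatrix}T\\ \vdots\\ T\end{pmatrix}$ with $n$ rows, with left $B_n'$-action and right $T$-action given by matrix multiplication. Then $M_n\otimes_TX$ is an indecomposable left $B_n'$-module.
   Context: Standard notions only: Artin algebras, tensor products of bimodules and modules. *)

(* Defs.v *)
From HB Require Import structures.
From mathcomp Require Import all_boot all_order all_algebra.
Set Implicit Arguments. Unset Strict Implicit. Unset Printing Implicit Defensive.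
Import Order.TTheory GRing.Theory Num.Theory.
Local Open Scope ring_scope.

Definition is_ideal (R : comNzRingType) (I : R -> Prop) : Prop :=
  I 0 /\ (forall x y, I x -> I y -> I (x + y)) /\ (forall r x, I x -> I (r * x)).

Definition artinian_ring (R : comNzRingType) : Prop :=
  forall I : nat -> R -> Prop,
    (forall k, is_ideal (I k)) ->
    (forall k x, I k.+1 x -> I k x) ->
    exists N, forall k, (N <= k)%N -> forall x, I k x <-> I N x.

Definition fin_gen (R : pzRingType) (V : lmodType R) : Prop :=
  exists s : seq V, forall v : V, exists c : nat -> R,
    v = \sum_(i < size s) c i *: s`_i.

Definition artin_algebra (R : comNzRingType) (T : algType R) : Prop :=
  artinian_ring R /\ fin_gen (T : lmodType R).

Definition is_submod (T : pzRingType) (X : lmodType T) (U : X -> Prop) : Prop :=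
  U 0 /\ (forall x y, U x -> U y -> U (x + y)) /\ (forall t x, U x -> U (t *: x)).

Definition indecomposable (V : zmodType) (sub : (V -> Prop) -> Prop) : Prop :=
  (exists v : V, v <> 0) /\
  forall U W : V -> Prop, sub U -> sub W ->
    (forall v, U v -> W v -> v = 0) ->
    (forall v, exists u w, U u /\ W w /\ v = u + w) ->
    (forall v, U v -> v = 0) \/ (forall v, W v -> v = 0).

(* Upper triangular n x n matrices: the elements of B_n'. *)
Definition upper_tri (T : pzRingType) (n : nat) (A : 'M[T]_n) : Prop :=
  forall i j : 'I_n, (j < i)%N -> A i j = 0.

(* M_n = column T^n, right T-action by matrix multiplication. *)
Definition rmulM (T : pzRingType) (n : nat) (m : 'cV[T]_n) (t : T) : 'cV[T]_n :=
  m *m (t%:M : 'M[T]_1).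

Definition balanced (T : pzRingType) (n : nat) (X : lmodType T) (G : zmodType)
  (f : 'cV[T]_n -> X -> G) : Prop :=
  (forall m1 m2 x, f (m1 + m2) x = f m1 x + f m2 x) /\
  (forall m x1 x2, f m (x1 + x2) = f m x1 + f m x2) /\
  (forall m t x, f (rmulM m t) x = f m (t *: x)).

Definition is_tensor_product (T : pzRingType) (n : nat) (X : lmodType T)
  (P : zmodType) (tens : 'cV[T]_n -> X -> P) : Prop :=
  balanced tens /\
  forall (G : zmodType) (f : 'cV[T]_n -> X -> G), balanced f ->
    (exists g : P -> G, (forall p q, g (p + q) = g p + g q) /\
                        (forall m x, g (tens m x) = f m x)) /\
    (forall g1 g2 : P -> G,
        (forall p q, g1 (p + q) = g1 p + g1 q) ->
        (forall p q, g2 (p + q) = g2 p + g2 q) ->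
        (forall m x, g1 (tens m x) = f m x) ->
        (forall m x, g2 (tens m x) = f m x) ->
        forall p, g1 p = g2 p).

Definition induced_action (T : pzRingType) (n : nat) (X : lmodType T)
  (P : zmodType) (tens : 'cV[T]_n -> X -> P) (act : 'M[T]_n -> P -> P) : Prop :=
  forall A, upper_tri A ->
    (forall p q, act A (p + q) = act A p + act A q) /\
    (forall m x, act A (tens m x) = tens (A *m m) x).

Definition is_Bsubmod (T : pzRingType) (n : nat) (P : zmodType)
  (act : 'M[T]_n -> P -> P) (U : P -> Prop) : Prop :=
  U 0 /\ (forall p q, U p -> U q -> U (p + q)) /\
  (forall A p, upper_tri A -> U p -> U (act A p)).

(* Main.v *)
Require Import Defs.
From mathcomp Require Import all_boot all_order all_algebra.
Import GRing.Theory.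
Local Open Scope ring_scope.

Theorem lemma4p3 (R : comNzRingType) (T : algType R) (X : lmodType T) (n : nat)
  (P : zmodType) (tens : 'cV[T]_n -> X -> P) (act : 'M[T]_n -> P -> P) :
  artin_algebra T ->
  fin_gen X ->
  indecomposable (@is_submod T X) ->
  (0 < n)%N ->
  is_tensor_product tens ->
  induced_action tens act ->
  indecomposable (is_Bsubmod act).
Proof.
move=> _ _ [[x0 nx0] indX] n0 [[tD1 [tD2 tB]] tU] hact.
pose i0 : 'I_n := Ordinal n0.
pose d (i : 'I_n) : 'cV[T]_n := delta_mx i 0.
have tens0 x : tens 0 x = 0.
  by apply/(addrI (tens 0 x)); rewrite addr0 -tD1 addr0.
have tensr0 m : tens m 0 = 0.
  by apply/(addrI (tens m 0)); rewrite addr0 -tD2 addr0.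
have tsum (I : finType) (F : I -> 'cV[T]_n) x : tens (\sum_i F i) x = \sum_i tens (F i) x.
  by apply: (big_morph (fun m => tens m x)) => [m1 m2|]; [exact: tD1|exact: tens0].
have uniq (f : 'cV[T]_n -> X -> P) (g1 g2 : P -> P) : balanced f ->
  (forall p q, g1 (p + q) = g1 p + g1 q) ->
  (forall p q, g2 (p + q) = g2 p + g2 q) ->
  (forall m x, g1 (tens m x) = f m x) ->
  (forall m x, g2 (tens m x) = f m x) -> forall p, g1 p = g2 p.
  by move=> bf; have [_ ] := tU P f bf; apply.
have rowD i j (m : 'cV[T]_n) : delta_mx i j *m m = rmulM (d i) (m j 0).
  rewrite /rmulM /d -(@mul_delta_mx T n 1 n (0 : 'I_1) i j) -mulmxA -rowE.
  by rewrite {1}(mx11_scalar (row j m)) mxE.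
have hpi j : exists g : P -> X, (forall p q, g (p + q) = g p + g q) /\
    (forall m x, g (tens m x) = m j 0 *: x).
  have bal : balanced (fun (m : 'cV[T]_n) (x : X) => m j 0 *: x).
    split; first by move=> m1 m2 x; rewrite mxE scalerDl.
    split; first by move=> m x1 x2; rewrite scalerDr.
    by move=> m t x; rewrite /rmulM mxE big_ord1 mxE eqxx mulr1n scalerA.
  by have [[g [g1 g2]] _] := tU X _ bal; exists g.
have ut (i j : 'I_n) : (i <= j)%N -> upper_tri (delta_mx i j : 'M[T]_n).
  move=> ij a b ba; rewrite mxE; case: eqP => [ai|] //; case: eqP => [bj|] //=.
  by move: ba; rewrite ai bj ltnNge ij.
have actE (i j : 'I_n) (g : P -> X) : (i <= j)%N -> (forall p q, g (p + q) = g p + g q) ->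
    (forall m x, g (tens m x) = m j 0 *: x) ->
    forall p, act (delta_mx i j) p = tens (d i) (g p).
  move=> ij gD gt; have [aD aT] := hact _ (ut _ _ ij).
  apply: (uniq (fun m x => tens (delta_mx i j *m m) x)) => //.
  - split; first by move=> m1 m2 x; rewrite mulmxDr tD1.
    split; first by move=> m x1 x2; rewrite tD2.
    by move=> m t x; rewrite /rmulM mulmxA tB.
  - by move=> p q; rewrite gD tD2.
  - by move=> m x; rewrite gt -tB -rowD.
have pid (i : 'I_n) (g : P -> X) : (forall m x, g (tens m x) = m i 0 *: x) -> forall x, g (tens (d i) x) = x.
  by move=> gt x; rewrite gt mxE !eqxx scale1r.
have dec p : p = \sum_i act (delta_mx i i) p.
  apply: (uniq tens id (fun p => \sum_i act (delta_mx i i) p)) => //.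
  - by move=> q r; rewrite -big_split; apply: eq_bigr => i _; case: (hact _ (ut i i (leqnn i))).
  - move=> m x; rewrite -[in RHS](mul1mx m) mx1_sum_delta mulmx_suml tsum.
    by apply: eq_bigr => i _; case: (hact _ (ut i i (leqnn i))).
have [g0 [g0D g0t]] := hpi i0.
have inj0 x : tens (d i0) x = 0 -> x = 0.
  by move=> h; rewrite -(pid _ _ g0t x) h -(tens0 x) g0t mxE scale0r.
split; first by exists (tens (d i0) x0) => /inj0.
have key (U : P -> Prop) : is_Bsubmod act U ->
    (forall x, U (tens (d i0) x) -> x = 0) -> forall p, U p -> p = 0.
  move=> [U0 [UD Uact]] h p Up; rewrite (dec p) big1 // => i _.
  have [g [gD gt]] := hpi i.
  have -> := actE i i g (leqnn i) gD gt p.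
  have := actE i0 i g (leq0n i) gD gt p => e.
  have -> : g p = 0 by apply: h; rewrite -e; apply: Uact => //; apply: ut.
  exact: tensr0.
move=> U W sU sW UW UWsum.
have subm (V : P -> Prop) : is_Bsubmod act V -> is_submod (fun x => V (tens (d i0) x)).
  move=> [V0 [VD Vact]]; split; first by rewrite tensr0.
  split; first by move=> x y; rewrite tD2; apply: VD.
  move=> t x Vx.
  have utt : upper_tri (t%:M : 'M[T]_n).
    move=> a b ba; rewrite mxE.
    have /negbTE -> : a != b by apply: contraTneq ba => ->; rewrite ltnn.
    by rewrite mulr0n.
  have -> : tens (d i0) (t *: x) = act (t%:M) (tens (d i0) x).
    have [_ ->] := hact (t%:M) utt.
    rewrite mul_scalar_mx -tB /rmulM; congr tens.
    apply/matrixP => a b; rewrite !mxE big_ord1 !mxE (ord1 b) eqxx /=.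
    by rewrite mulr1n mulr_natl mulr_natr.
  exact: Vact.
have H1 : forall x, U (tens (d i0) x) -> W (tens (d i0) x) -> x = 0.
  by move=> x Ux Wx; apply: inj0; apply: UW.
have H2 : forall x, exists u w, U (tens (d i0) u) /\ W (tens (d i0) w) /\ x = u + w.
  move=> x; have [u [w [Uu [Ww e]]]] := UWsum (tens (d i0) x).
  have e2 : forall p, act (delta_mx i0 i0) p = tens (d i0) (g0 p) := actE i0 i0 g0 (leqnn _) g0D g0t.
  exists (g0 u), (g0 w).
  case: sU => _ [_ Ua]; case: sW => _ [_ Wa].
  split; first by rewrite -e2; exact: (Ua _ _ (ut _ _ (leqnn _)) Uu).
  split; first by rewrite -e2; exact: (Wa _ _ (ut _ _ (leqnn _)) Ww).
  by rewrite -g0D -e (pid _ _ g0t).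
have [h|h] := indX _ _ (subm _ sU) (subm _ sW) H1 H2.
  by left; apply: key sU h.
by right; apply: key sW h.
Qed.
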